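(* Let $N\ge2$, $d\ge1$, $1\le p\le q\le\infty$, let $S\subset\mathbb{Z}_N^d$ be nonempty and satisfy a $(p,q)$-restriction estimate with constant $C_{p,q}>0$, and let $E\subset\mathbb{Z}_N^d$ satisfy $$|E|^{1/p}\cdot|S|<\frac{N^d}{2C_{p,q}}.$$ Let $r(x)=\sum_{m\notin S}\chi(x\cdot m)\widehat{1_E}(m)$ and $G(x)=1$ if $|r(x)|\ge1/2$, $G(x)=0$ otherwise. Then $G=1_E$ on $\mathbb{Z}_N^d$.
   Context: $\chi(t)=e^{2\pi i t/N}$, $\hat h(m)=N^{-d}\sum_{x\in\mathbb{Z}_N^d}\chi(-x\cdot m)h(x)$, and $1_E$ is the indicator function of $E$. A $(p,q)$-restriction estimate holds for a nonempty $S$ with constant $C_{p,q}$ if for every $h:\mathbb{Z}_N^d\to\mathbb{C}$, $\big(\frac{1}{|S|}\sum_{m\in S}|\hat h(m)|^q\big)^{1/q}\le C_{p,q}N^{-d}\big(\sum_x|h(x)|^p\big)^{1/p}$ (for $q=\infty$ the left side is $\max_{m\in S}|\hat h(m)|$). *)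

(* Defs.v *)
From HB Require Import structures.
From mathcomp Require Import all_boot all_order all_algebra.
From mathcomp Require Import all_classical all_reals.
From mathcomp Require Import ereal exp trigo.
From mathcomp Require Import complex.
Set Implicit Arguments. Unset Strict Implicit. Unset Printing Implicit Defensive.
Import Order.TTheory GRing.Theory Num.Theory.
Local Open Scope ring_scope.

Notation normc := ComplexField.Normc.normc.

Section Fourier.
Variable R : realType.
Variables N d : nat.

Definition pt := {ffun 'I_d -> 'I_N}.

(* x . m, as an integer; chi only depends on it modulo N *)
Definition dot (x m : pt) : int := (\sum_(i < d) (x i : nat) * (m i : nat))%N%:Z.

Definition chi (t : int) : R[i] :=
  Complex (cos (2 * pi * t%:~R / N%:R)) (sin (2 * pi * t%:~R / N%:R)).

Definition fhat (h : pt -> R[i]) (m : pt) : R[i] :=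
  (N%:R ^+ d)^-1 * \sum_(x : pt) chi (- dot x m) * h x.

Definition indic (E : {set pt}) (x : pt) : R[i] := if x \in E then 1 else 0.

Definition lpnorm (p : \bar R) (f : pt -> R) : R :=
  match p with
  | EFin r => (\sum_(x : pt) f x `^ r) `^ r^-1
  | +oo%E => \big[Order.max/0]_(x : pt) f x
  | -oo%E => 0
  end.

Definition avgnorm (q : \bar R) (S : {set pt}) (f : pt -> R) : R :=
  match q with
  | EFin r => ((#|S|%:R)^-1 * \sum_(m in S) f m `^ r) `^ r^-1
  | +oo%E => \big[Order.max/0]_(m in S) f m
  | -oo%E => 0
  end.

Definition restriction_estimate (p q : \bar R) (S : {set pt}) (C : R) : Prop :=
  forall h : pt -> R[i],
    avgnorm q S (fun m => normc (fhat h m))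
      <= C * (N%:R ^+ d)^-1 * lpnorm p (fun x => normc (h x)).

(* |E|^{1/p}, with 1/+oo = 0 *)
Definition card_pow (p : \bar R) (E : {set pt}) : R :=
  match p with
  | EFin r => (#|E|%:R) `^ r^-1
  | _ => 1
  end.

Definition rfun (S E : {set pt}) (x : pt) : R[i] :=
  \sum_(m in ~: S) chi (dot x m) * fhat (indic E) m.

Definition Gfun (S E : {set pt}) (x : pt) : R[i] :=
  if 2^-1 <= normc (rfun S E x) then 1 else 0.

End Fourier.

(* Main.v *)
Require Import Defs.
From HB Require Import structures.
From mathcomp Require Import all_boot all_order all_algebra.
From mathcomp Require Import all_classical all_reals.
From mathcomp Require Import ereal exp trigo.
From mathcomp Require Import complex.
From mathcomp Require Import convex hoelder.
From mathcomp Require Import ring lra.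
Import Order.TTheory GRing.Theory Num.Theory.
Local Open Scope ring_scope.

Section Chi.
Variable R : realType.
Variable N : nat.
Hypothesis N0 : (0 < N)%N.

Lemma chiD (s t : int) : chi R N (s + t) = chi R N s * chi R N t.
Proof.
rewrite /chi intrD mulrDr mulrDl cosD sinD.
by apply/eqP; rewrite eq_complex /= !eqxx /= [X in _ == X]addrC eqxx.
Qed.

Lemma chi0 : chi R N 0 = 1.
Proof. by rewrite /chi !mulr0 mul0r cos0 sin0. Qed.

Lemma chiNn : chi R N N%:Z = 1.
Proof.
rewrite /chi -mulrA mulfV ?mulr1; last by rewrite pnatr_eq0 -lt0n.
by rewrite mulr_natl cos2pi sin2pi.
Qed.

Lemma chiX (t : int) (n : nat) : chi R N t ^+ n = chi R N (t * n%:Z).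
Proof.
elim: n => [|n IH]; first by rewrite expr0 mulr0 chi0.
by rewrite exprS IH -chiD -[n.+1]addn1 PoszD mulrDr mulr1 addrC.
Qed.

Lemma chiNK (t : int) : chi R N (- t) * chi R N t = 1.
Proof. by rewrite -chiD addNr chi0. Qed.

Lemma chi_mulN (k : int) : chi R N (k * N%:Z) = 1.
Proof.
have hn : forall n : nat, chi R N (n%:Z * N%:Z) = 1.
  by move=> n; rewrite mulrC -chiX chiNn expr1n.
case: k => n; first exact: hn.
rewrite NegzE mulNr.
by have := chiNK (n.+1%:Z * N%:Z); rewrite hn mulr1.
Qed.

Lemma chiDN (t : int) : chi R N (t + N%:Z) = chi R N t.
Proof. by rewrite chiD chiNn mulr1. Qed.

Lemma normc_chi t : normc (chi R N t) = 1.
Proof. by rewrite /chi /= cos2Dsin2 sqrtr1. Qed.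

Lemma chi_ne1 (j : nat) : (0 < j < N)%N -> chi R N j%:Z != 1.
Proof.
move=> /andP[j0 jN]; apply/negP => /eqP; rewrite /chi => -[] + _.
set th := (2 * pi * _ / _).
have N0' : (0 : R) < N%:R by rewrite ltr0n.
have th0 : 0 < th.
  by rewrite /th divr_gt0 // mulr_gt0 ?mulr_gt0 ?pi_gt0 // ltr0n.
have th2 : th < pi *+ 2.
  rewrite /th ltr_pdivrMr //.
  have p2 : (0:R) < pi *+ 2 by rewrite pmulrn_lgt0 ?pi_gt0.
  have -> : (j%:~R : R) = j%:R by [].
  by rewrite mulr_natl ltr_pM2l // ltr_nat.
move=> cth.
have pi0 := @pi_gt0 R.
have c0 : (0:R) \in `[0, pi] by rewrite in_itv /= lexx ltW.
have [thpi|pith] := leP th pi.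
  have : th = 0 by apply: cos_inj; rewrite ?cth ?cos0 // in_itv /= ltW.
  by move=> th00; move: th0; rewrite th00 ltxx.
have e : cos (pi *+ 2 - th) = 1.
  by rewrite addrC cosD2pi cosN.
have : pi *+ 2 - th = 0.
  apply: cos_inj; rewrite ?e ?cos0 // in_itv /=.
  rewrite subr_ge0 ltW //= lerBlDr mulr2n.
  by rewrite lerD2l ltW.
by move/eqP; rewrite subr_eq0 => /eqP ee; move: th2; rewrite ee ltxx.
Qed.
End Chi.

From mathcomp Require Import zify.

Section Ortho.
Variable R : realType.
Variables N d : nat.
Hypothesis N0 : (0 < N)%N.

Lemma geo (w : R[i]) : w ^+ N = 1 -> w != 1 -> \sum_(k < N) w ^+ k = 0.
Proof.
move=> wN w1; have := subrX1 w N; rewrite wN subrr => /esym/eqP.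
by rewrite mulf_eq0 subr_eq0 (negbTE w1) => /eqP.
Qed.

Lemma ortho1 (a b : 'I_N) :
  \sum_(k : 'I_N) chi R N (a%:Z - b%:Z) ^+ k = if a == b then N%:R else 0.
Proof.
case: eqP => [->|ab].
  by rewrite subrr chi0 (eq_bigr (fun _ => 1)) ?sumr_const ?card_ord // => k _; rewrite expr1n.
apply: geo; first by rewrite chiX chi_mulN.
have aN := ltn_ord a; have bN := ltn_ord b.
have ab' : (a : nat) != b by apply/eqP => h; apply: ab; apply: val_inj.
case: (ltngtP a b) => h.
- rewrite -(chiDN _ _ N0).
  have -> : a%:Z - b%:Z + N%:Z = (N + a - b)%N%:Z by lia.
  apply: chi_ne1 => //; lia.
- have -> : a%:Z - b%:Z = (a - b)%N%:Z by lia.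
  apply: chi_ne1 => //; lia.
- by move: ab'; rewrite h eqxx.
Qed.

Lemma dotB (x y m : pt N d) :
  dot x m - dot y m = \sum_i ((x i)%:Z - (y i)%:Z) * (m i)%:Z.
Proof.
rewrite /dot !(big_morph Posz PoszD (erefl 0%:Z)) -sumrB.
by apply: eq_bigr => i _; rewrite !PoszM mulrBl.
Qed.

Lemma ortho (x y : pt N d) :
  \sum_(m : pt N d) chi R N (dot x m - dot y m) = if x == y then N%:R ^+ d else 0.
Proof.
rewrite (eq_bigr (fun m : pt N d => \prod_i chi R N ((x i)%:Z - (y i)%:Z) ^+ (m i))); last first.
  move=> m _; rewrite dotB (big_morph _ (chiD R N) (chi0 R N)).
  by apply: eq_bigr => i _; rewrite chiX.
rewrite -(bigA_distr_bigA (fun i (k : 'I_N) => chi R N ((x i)%:Z - (y i)%:Z) ^+ k)) /=.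
rewrite (eq_bigr _ (fun i _ => ortho1 (x i) (y i))).
case: eqP => [->|xy].
  by rewrite (eq_bigr (fun _ => N%:R)) ?prodr_const ?card_ord // => i _; rewrite eqxx.
case: (pickP (fun i => x i != y i)) => [i hi|h].
  by rewrite (bigD1 i) //= (negbTE hi) mul0r.
by exfalso; apply: xy; apply/ffunP => i; move: (h i) => /= /negbFE /eqP.
Qed.
End Ortho.

Section Inv.
Variable R : realType.
Variables N d : nat.
Hypothesis N0 : (0 < N)%N.

Lemma inversion (h : pt N d -> R[i]) (x : pt N d) :
  \sum_(m : pt N d) chi R N (dot x m) * fhat h m = h x.
Proof.
rewrite /fhat.
set c := (N%:R ^+ d)^-1.
transitivity (c * \sum_(y : pt N d) h y * \sum_(m : pt N d) chi R N (dot x m - dot y m)).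
  under [X in _ = _ * X]eq_bigr => y _ do rewrite big_distrr /=.
  rewrite exchange_big big_distrr /=; apply: eq_bigr => m _.
  rewrite mulrCA big_distrr /=; congr (_ * _); apply: eq_bigr => y _.
  by rewrite mulrA -chiD mulrC.
rewrite (eq_bigr (fun y => h y * (if x == y then N%:R ^+ d else 0))); last first.
  by move=> y _; rewrite ortho.
rewrite (bigD1 x) //= eqxx big1 ?addr0; last first.
  by move=> y /negbTE; rewrite eq_sym => ->; rewrite mulr0.
by rewrite mulrCA /c mulVf ?mulr1 // expf_neq0 // pnatr_eq0 -lt0n.
Qed.
End Inv.

Section Real.
Variable R : realType.

Lemma normc_sum (I : finType) (P : pred I) (F : I -> R[i]) :
  normc (\sum_(i | P i) F i) <= \sum_(i | P i) normc (F i).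
Proof.
apply: (big_ind2 (fun (a : R[i]) (b : R) => normc a <= b)).
- by rewrite ComplexField.Normc.normc0.
- move=> a b c e h1 h2; apply: le_trans (le_normcD a c) _; exact: lerD.
- by [].
Qed.

Lemma conv2 (r l x y : R) : 1 <= r -> 0 <= l -> l <= 1 -> 0 <= x -> 0 <= y ->
  (l * x + (1 - l) * y) `^ r <= l * x `^ r + (1 - l) * y `^ r.
Proof.
move=> r1 l0 l1 x0 y0.
have := @convex_powR R r r1 (Itv01 l0 l1) x y.
rewrite !inE /= !in_itv /= !andbT => /(_ x0 y0).
by rewrite !convRE.
Qed.
End Real.

Section PM.
Variable R : realType.

Lemma powmean (r : R) (I : Type) (f : I -> R) (s : seq I) :
  1 <= r -> (forall i, 0 <= f i) -> (0 < size s)%N ->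
  ((\sum_(i <- s) f i) / (size s)%:R) `^ r <= (\sum_(i <- s) f i `^ r) / (size s)%:R.
Proof.
move=> r1 f0; elim: s => [//|a t IH] _.
case: t IH => [|b t] IH.
  by rewrite !big_cons !big_nil !addr0 /= !divr1 lexx.
move: IH; set t' := b :: t => IH.
have := IH isT.
set n := size t'.
have n0 : (0 : R) < n%:R by rewrite ltr0n.
set A := \sum_(i <- t') f i; set B := \sum_(i <- t') f i `^ r.
have A0 : 0 <= A by apply: sumr_ge0.
move=> IH'.
rewrite (_ : \sum_(i <- a :: t') f i = f a + A); last by rewrite big_cons.
rewrite (_ : \sum_(i <- a :: t') f i `^ r = f a `^ r + B); last by rewrite big_cons.
rewrite [size _]/= -/n.
pose l : R := n%:R / (n.+1)%:R.
have n10 : (0 : R) < (n.+1)%:R by rewrite ltr0n.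
have l0 : 0 <= l by rewrite divr_ge0 // ltW.
have l1 : l <= 1 by rewrite ler_pdivrMr // mul1r ler_nat.
have e1 : (f a + A) / (n.+1)%:R = l * (A / n%:R) + (1 - l) * f a.
  rewrite /l -[n.+1]addn1 natrD; field.
  by apply/andP; split; rewrite ?gt_eqF // -natrD ltr0n addn1.
rewrite e1; apply: le_trans (@conv2 R r l (A / n%:R) (f a) r1 l0 l1 _ (f0 a)) _.
  by rewrite divr_ge0 // ltW.
apply: le_trans (_ : l * (B / n%:R) + (1 - l) * f a `^ r <= _).
  by rewrite lerD2r ler_wpM2l.
rewrite /l -[n.+1]addn1 natrD le_eqVlt; apply/orP; left; apply/eqP; field.
by apply/andP; split; rewrite ?gt_eqF // -natrD ltr0n addn1.
Qed.
End PM.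

Section Main.
Variable R : realType.
Variables N d : nat.

Lemma sum_le_avg (q : \bar R) (S : {set pt N d}) (f : pt N d -> R) :
  (1 <= q)%E -> (forall m, 0 <= f m) -> (0 < #|S|)%N ->
  \sum_(m in S) f m <= #|S|%:R * avgnorm q S f.
Proof.
case: q => [r| |] //= hq f0 S0.
- rewrite lee_fin in hq.
  have r0 : 0 < r by apply: lt_le_trans hq.
  have := @powmean R r _ f (enum S) hq f0; rewrite -cardE !big_enum => /(_ S0) pm.
  set n := #|S|%:R in pm *.
  have n0 : (0:R) < n by rewrite ltr0n.
  set M := (\sum_(m in S) f m) / n in pm.
  have M0 : 0 <= M by apply: divr_ge0; [exact: sumr_ge0 | exact: ltW].
  have -> : \sum_(m in S) f m = n * M by rewrite /M mulrC divfK // gt_eqF.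
  rewrite ler_pM2l //.
  have -> : M = (M `^ r) `^ r^-1 by rewrite -powRrM mulfV ?gt_eqF // powRr1.
  apply: ge0_ler_powR.
  + by rewrite invr_ge0 ltW.
  + by rewrite nnegrE powR_ge0.
  + rewrite nnegrE; apply: mulr_ge0; first by rewrite invr_ge0 ltW.
    by apply: sumr_ge0 => i _; rewrite powR_ge0.
  + by rewrite mulrC.
- rewrite mulr_natl -sumr_const; apply: ler_sum => m mS.
  exact: le_bigmax_cond.
Qed.

Lemma lp_le_card (p : \bar R) (E : {set pt N d}) :
  (1 <= p)%E -> lpnorm p (fun x => normc (indic R E x)) <= card_pow p E.
Proof.
case: p => [r| |] //= hp.
- rewrite lee_fin in hp.
  have r0 : r != 0 by rewrite gt_eqF // (lt_le_trans _ hp).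
  rewrite (eq_bigr (fun x => if x \in E then 1 else 0)); last first.
    move=> x _; rewrite /indic; case: ifP => _.
      by rewrite ComplexField.Normc.normc1 powR1.
    by rewrite ComplexField.Normc.normc0 powR0.
  by rewrite -big_mkcond /= sumr_const.
- apply: bigmax_le => // x _; rewrite /indic; case: ifP => _.
    by rewrite ComplexField.Normc.normc1.
  by rewrite ComplexField.Normc.normc0.
Qed.
End Main.

Theorem theorem4 (R : realType) (N d : nat) (p q : \bar R) (S E : {set pt N d}) (C : R) :
  (2 <= N)%N -> (1 <= d)%N ->
  (1 <= p)%E -> (p <= q)%E ->
  (0 < #|S|)%N ->
  0 < C ->
  restriction_estimate p q S C ->
  card_pow p E * #|S|%:R < N%:R ^+ d / (2 * C) ->
  forall x : pt N d, Gfun R S E x = indic R E x.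
Proof.
move=> N2 d1 p1 pq S0 C0 hest hcard x.
have N0 : (0 < N)%N by apply: leq_trans N2.
have q1 : (1 <= q)%E by apply: le_trans pq.
set f := fun m => normc (fhat (indic R E) m).
set s := \sum_(m in S) chi R N (dot x m) * fhat (indic R E) m.
have inv := @inversion R N d N0 (indic R E) x.
rewrite (bigID (fun m => m \in S)) /= in inv.
have hr : \sum_(m | m \notin S) chi R N (dot x m) * fhat (indic R E) m = rfun R S E x.
  by rewrite /rfun; apply: eq_bigl => m; rewrite finset.in_setC.
rewrite hr -/s in inv.
set Nd : R := N%:R ^+ d.
have Nd0 : 0 < Nd by rewrite exprn_gt0 // ltr0n.
have hs : normc s < 2^-1.
  apply: le_lt_trans (@normc_sum R _ _ _) _.
  rewrite (eq_bigr f); last first.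
    by move=> m _; rewrite ComplexField.Normc.normcM normc_chi // mul1r.
  apply: le_lt_trans (@sum_le_avg R N d q S f q1 _ S0) _.
    by move=> m; rewrite /f /ComplexField.Normc.normc; case: (fhat _ _) => a b; rewrite sqrtr_ge0.
  apply: le_lt_trans (_ : #|S|%:R * (C * Nd^-1 * card_pow p E) < _).
    rewrite ler_pM2l ?ltr0n //; apply: le_trans (hest (indic R E)) _.
    rewrite ler_pM2l ?mulr_gt0 ?invr_gt0 //.
    exact: lp_le_card.
  have K0 : 0 < C / Nd by rewrite divr_gt0.
  have -> : #|S|%:R * (C * Nd^-1 * card_pow p E) = (card_pow p E * #|S|%:R) * (C / Nd).
    by ring.
  have -> : (2^-1 : R) = Nd / (2 * C) * (C / Nd).
    by field; rewrite !gt_eqF.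
  by rewrite ltr_pM2r.
rewrite /Gfun /indic; case xE: (x \in E); rewrite /indic xE in inv.
- rewrite ifT //.
  have := le_normcD s (rfun R S E x); rewrite inv ComplexField.Normc.normc1.
  move=> h; apply: ltW; apply: (lt_le_trans _ (_ : 1 - normc s <= _)).
    clear -hs; lra.
  by rewrite lerBlDl.
- rewrite ifF //.
  have -> : rfun R S E x = - s by apply/eqP; rewrite -addr_eq0 addrC inv.
  by rewrite normcN; apply/negP => h; move: (le_lt_trans h hs); rewrite ltxx.
Qed.
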